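(* $E_{range}<^{\mathrm{fin}}_{\mathrm{Learn}}E_0$: every finite $E_{range}$-learnable family of structures is $E_0$-learnable, and there is a finite family (namely $\{\omega,\omega^*\}$) that is $E_0$-learnable but not $E_{range}$-learnable.
   Context: All structures are countable, have domain $\mathbb{N}$, are in a finite relational signature, and are identified with their atomic diagrams (elements of $2^{\mathbb{N}}$). A family of structures is a countable set of pairwise nonisomorphic such structures. $\mathrm{LD}(\mathfrak{K})\subseteq 2^{\mathbb{N}}$ is the set of structures with domain $\mathbb{N}$ isomorphic to a member of $\mathfrak{K}$ (subspace topology). For an equivalence relation $E$ on a space $X$, $\mathfrak{K}$ is $E$-learnable if there is a continuous $\Gamma:\mathrm{LD}(\mathfrak{K})\to X$ with $\mathcal{S}\cong\mathcal{S}'\iff\Gamma(\mathcal{S})\,E\,\Gamma(\mathcal{S}')$ for all $\mathcal{S},\mathcal{S}'\in\mathrm{LD}(\mathfrak{K})$. On Baire space $\mathbb{N}^{\mathbb{N}}$: $p\,E_0\,q\iff\exists m\,\forall n\ge m\ p(n)=q(n)$; $p\,E_{range}\,q\iff\{p(m):m\}=\{q(m):m\}$. $\omega$ and $\omega^*$ are the linear orders of the natural numbers and of the negative integers. For criteria $X,Y$: $X\leq^{\mathrm{fin}}_{\mathrm{Learn}}Y$ means every finite $X$-learnable family is $Y$-learnable, and $<^{\mathrm{fin}}_{\mathrm{Learn}}$ means $\leq^{\mathrm{fin}}_{\mathrm{Learn}}$ but not the converse. *)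

(* Defs.v *)
From Stdlib Require Import Arith List Lia.
Import ListNotations.

Record signature := Sig { nrel : nat; arity : nat -> nat }.

(* Only
   well-formed atomic facts (i < nrel, length l = arity i) can be true,
   so structures correspond exactly to atomic diagrams (elements of 2^N
   under a fixed coding of atomic facts). *)
Definition Struc (sig : signature) :=
  { R : nat -> list nat -> bool |
    forall i l, R i l = true -> i < nrel sig /\ length l = arity sig i }.

Definition rel {sig} (S : Struc sig) : nat -> list nat -> bool := proj1_sig S.

Definition iso {sig} (A B : Struc sig) : Prop :=
  exists f g : nat -> nat,
    (forall x, g (f x) = x) /\ (forall x, f (g x) = x) /\
    forall i l, rel A i l = rel B i (map f l).

Definition finite_family {sig} (K : list (Struc sig)) : Prop :=
  ForallOrdPairs (fun A B => ~ iso A B) K.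

Definition LD {sig} (K : list (Struc sig)) (S : Struc sig) : Prop :=
  exists A, In A K /\ iso S A.

Definition agree_on {sig} (S S' : Struc sig) (F : list (nat * list nat)) : Prop :=
  forall p, In p F -> rel S (fst p) (snd p) = rel S' (fst p) (snd p).

(* Continuity of Gamma : LD(K) -> Baire space, where LD(K) carries the
   subspace topology of Cantor space 2^N (basic opens = agreement on
   finitely many atomic facts) and Baire space the product topology. *)
Definition continuous_on_LD {sig} (K : list (Struc sig))
    (Gamma : Struc sig -> nat -> nat) : Prop :=
  forall S, LD K S -> forall n, exists F : list (nat * list nat),
    forall S', LD K S' -> agree_on S S' F ->
      forall k, k < n -> Gamma S' k = Gamma S k.

(* E-learnability for an equivalence relation E on Baire space.
   (Gamma is given as a total function; only its values on LD(K) matter.) *)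
Definition learnable {sig} (E : (nat -> nat) -> (nat -> nat) -> Prop)
    (K : list (Struc sig)) : Prop :=
  exists Gamma : Struc sig -> nat -> nat,
    continuous_on_LD K Gamma /\
    forall S S', LD K S -> LD K S' -> (iso S S' <-> E (Gamma S) (Gamma S')).

Definition E0 (p q : nat -> nat) : Prop :=
  exists m, forall n, m <= n -> p n = q n.

Definition Erange (p q : nat -> nat) : Prop :=
  forall x, (exists m, p m = x) <-> (exists m, q m = x).

Definition sigLO : signature := Sig 1 (fun _ => 2).

Definition omega_rel (i : nat) (l : list nat) : bool :=
  match i, l with
  | 0, [x; y] => Nat.leb x y
  | _, _ => false
  end.

(* omega^*: the negative integers; element n of the domain codes -(n+1),
   so -(x+1) <= -(y+1) iff y <= x. *)
Definition omegastar_rel (i : nat) (l : list nat) : bool :=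
  match i, l with
  | 0, [x; y] => Nat.leb y x
  | _, _ => false
  end.

Lemma omega_rel_ok : forall i l, omega_rel i l = true ->
  i < nrel sigLO /\ length l = arity sigLO i.
Proof.
  intros [|i] l; simpl; [|discriminate].
  destruct l as [|x [|y [|z l]]]; simpl; try discriminate; split; auto.
Qed.

Lemma omegastar_rel_ok : forall i l, omegastar_rel i l = true ->
  i < nrel sigLO /\ length l = arity sigLO i.
Proof.
  intros [|i] l; simpl; [|discriminate].
  destruct l as [|x [|y [|z l]]]; simpl; try discriminate; split; auto.
Qed.

Definition omega : Struc sigLO := exist _ omega_rel omega_rel_ok.
Definition omegastar : Struc sigLO := exist _ omegastar_rel omegastar_rel_ok.

(* Main.v *)
Require Import Defs.
From Stdlib Require Import List Arith Lia Classical.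
Import ListNotations.

Lemma iso_refl {sig} (A : Struc sig) : iso A A.
Proof. exists (fun x => x), (fun x => x). repeat split; auto. intros; now rewrite map_id. Qed.

Lemma iso_sym {sig} (A B : Struc sig) : iso A B -> iso B A.
Proof.
  intros (f & g & H1 & H2 & H3). exists g, f. repeat split; auto.
  intros i l. rewrite H3, map_map. f_equal. rewrite <- (map_id l) at 1.
  apply map_ext. auto.
Qed.

Lemma iso_trans {sig} (A B C : Struc sig) : iso A B -> iso B C -> iso A C.
Proof.
  intros (f & g & H1 & H2 & H3) (f' & g' & H1' & H2' & H3').
  exists (fun x => f' (f x)), (fun x => g (g' x)). repeat split.
  - intro x. rewrite H1'. auto.
  - intro x. rewrite H2. auto.
  - intros i l. rewrite H3, H3', map_map. reflexivity.
Qed.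

Lemma Erange_sym p q : Erange p q -> Erange q p.
Proof. unfold Erange; intros H x; specialize (H x); tauto. Qed.
Lemma Erange_trans p q r : Erange p q -> Erange q r -> Erange p r.
Proof. unfold Erange; intros H H' x; specialize (H x); specialize (H' x); tauto. Qed.

Lemma forallb_ext {A} (p q : A -> bool) l : (forall x, p x = q x) -> forallb p l = forallb q l.
Proof. intro H; induction l; simpl; auto. rewrite H, IHl; auto. Qed.

Lemma existsb_ext_in {A} (p q : A -> bool) l : (forall x, In x l -> p x = q x) ->
  existsb p l = existsb q l.
Proof. induction l; simpl; intros H; auto. rewrite H, IHl; auto. Qed.

Definition seen (G : nat -> nat) n x := existsb (fun m => Nat.eqb (G m) x) (seq 0 (S n)).

Lemma seen_spec G n x : seen G n x = true <-> exists m, m <= n /\ G m = x.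
Proof.
  unfold seen. rewrite existsb_exists. split.
  - intros (m & Hm & He). apply in_seq in Hm. apply Nat.eqb_eq in He. exists m; split; auto; lia.
  - intros (m & Hm & He). exists m. split. apply in_seq; lia. now apply Nat.eqb_eq.
Qed.

Fixpoint codeb (b : nat -> bool) (W : list nat) : nat :=
  match W with [] => 0 | x :: W' => (if b x then 1 else 0) + 2 * codeb b W' end.

Lemma codeb_ext b b' W : (forall x, In x W -> b x = b' x) -> codeb b W = codeb b' W.
Proof.
  induction W; simpl; intros H; auto. rewrite H by auto. rewrite IHW; auto.
Qed.

Lemma codeb_inj b b' W : codeb b W = codeb b' W -> forall x, In x W -> b x = b' x.
Proof.
  induction W; simpl; intros H x Hx; [contradiction|].
  assert (b a = b' a /\ codeb b W = codeb b' W) as [Ha Hc].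
  { destruct (b a), (b' a); split; auto; lia. }
  destruct Hx as [<-|Hx]; auto.
Qed.

Lemma stab1 G x : exists N, forall n, N <= n -> (exists m, G m = x) -> seen G n x = true.
Proof.
  destruct (classic (exists m, G m = x)) as [[m Hm]|Hn].
  - exists m. intros n Hn _. apply seen_spec. exists m; auto.
  - exists 0. intros n _ H. contradiction.
Qed.

Lemma stab G W : exists N, forall n, N <= n -> forall x, In x W ->
  (seen G n x = true <-> exists m, G m = x).
Proof.
  induction W as [|a W IH].
  - exists 0. intros n _ x [].
  - destruct IH as [N HN]. destruct (stab1 G a) as [Na Ha].
    exists (max N Na). intros n Hn x [<-|Hx].
    + split; [intro H; apply seen_spec in H; destruct H as (m&_&Hm); eauto|].
      apply Ha. lia.
    + apply HN; auto. lia.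
Qed.

Lemma witnesses {A} (Gam : A -> nat -> nat) (L : list (A * A)) : exists W,
  forall a b, In (a, b) L -> ~ Erange (Gam a) (Gam b) ->
  exists x, In x W /\ ~ ((exists m, Gam a m = x) <-> (exists m, Gam b m = x)).
Proof.
  induction L as [|[a b] L IH].
  - exists []. intros a b [].
  - destruct IH as [W HW].
    destruct (classic (Erange (Gam a) (Gam b))) as [He|He].
    + exists W. intros a' b' [Heq|Hin] Hn; [inversion Heq; subst; contradiction|].
      auto.
    + unfold Erange in He. apply not_all_ex_not in He. destruct He as [x Hx].
      exists (x :: W). intros a' b' [Heq|Hin] Hn.
      * inversion Heq; subst. exists x; split; simpl; auto.
      * destruct (HW a' b' Hin Hn) as (y & Hy & Hy'). exists y; split; simpl; auto.
Qed.

Lemma part1 (sig : signature) (K : list (Struc sig)) :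
  finite_family K -> learnable Erange K -> learnable E0 K.
Proof.
  intros _ [Gam [Hc Hl]].
  destruct (witnesses Gam (list_prod K K)) as [W HW].
  exists (fun X n => codeb (seen (Gam X) n) W). split.
  - intros X HX n. destruct (Hc X HX n) as [F HF]. exists F.
    intros Y HY Hag k Hk. apply codeb_ext. intros x _.
    unfold seen. apply existsb_ext_in. intros m Hm. apply in_seq in Hm.
    rewrite (HF Y HY Hag m) by lia. reflexivity.
  - intros X Y HX HY.
    destruct (stab (Gam X) W) as [NX HNX]. destruct (stab (Gam Y) W) as [NY HNY].
    split.
    + intro Hi. apply Hl in Hi; auto. exists (max NX NY). intros n Hn.
      apply codeb_ext. intros x Hx.
      specialize (HNX n ltac:(lia) x Hx). specialize (HNY n ltac:(lia) x Hx).
      specialize (Hi x).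
      destruct (seen (Gam X) n x), (seen (Gam Y) n x); auto; exfalso;
        assert (false <> true) by discriminate; assert (true = true) by reflexivity; tauto.
    + intros [m Hm]. destruct (classic (iso X Y)) as [Hi|Hi]; auto. exfalso.
      assert (Hne : ~ Erange (Gam X) (Gam Y)) by (rewrite <- Hl; auto).
      destruct HX as (A & HA & HXA). destruct HY as (B & HB & HYB).
      assert (HA' : LD K A) by (exists A; split; auto; apply iso_refl).
      assert (HB' : LD K B) by (exists B; split; auto; apply iso_refl).
      assert (EXA : Erange (Gam X) (Gam A)) by (apply Hl; auto; exists A; auto).
      assert (EYB : Erange (Gam Y) (Gam B)) by (apply Hl; auto; exists B; auto).
      assert (Hab : ~ Erange (Gam A) (Gam B)).
      { intro E. apply Hne. eapply Erange_trans; [exact EXA|].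
        eapply Erange_trans; [exact E|]. apply Erange_sym; auto. }
      destruct (HW A B ltac:(apply in_prod; auto) Hab) as (x & Hx & Hnx).
      set (n := max m (max NX NY)).
      specialize (Hm n ltac:(lia)). simpl in Hm.
      pose proof (codeb_inj _ _ _ Hm x Hx) as Hs.
      specialize (HNX n ltac:(lia) x Hx). specialize (HNY n ltac:(lia) x Hx).
      specialize (EXA x). specialize (EYB x). rewrite Hs in HNX.
      apply Hnx. rewrite <- EXA, <- EYB, <- HNX, <- HNY. tauto.
Qed.

Lemma not_iso_omega : ~ iso omega omegastar.
Proof.
  intros (f & g & H1 & H2 & H3).
  specialize (H3 0 [0; g (f 0 + 1)]). simpl in H3. rewrite H2 in H3.
  destruct (Nat.leb_spec (f 0 + 1) (f 0)); [lia|]. discriminate.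
Qed.

Lemma ff : finite_family [omega; omegastar].
Proof.
  constructor.
  - constructor; [apply not_iso_omega | constructor].
  - constructor; constructor.
Qed.

Definition newmin (X : Struc sigLO) m := forallb (fun j => rel X 0 [m; j]) (seq 0 m).
Definition newmax (X : Struc sigLO) m := forallb (fun j => rel X 0 [j; m]) (seq 0 m).

Fixpoint st (X : Struc sigLO) n :=
  match n with
  | 0 => 0
  | S k => if newmin X (S k) then 1 else if newmax X (S k) then 0 else st X k
  end.

Lemma forallb_ext_in {A} (p q : A -> bool) l : (forall x, In x l -> p x = q x) ->
  forallb p l = forallb q l.
Proof. induction l; simpl; intros H; auto. rewrite H, IHl; auto. Qed.

Definition Pf (f : nat -> nat) m := forallb (fun j => Nat.leb (f m) (f j)) (seq 0 m).
Definition Qf (f : nat -> nat) m := forallb (fun j => Nat.leb (f j) (f m)) (seq 0 m).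

Lemma least_aux (P : nat -> bool) n : (forall j, j < n -> P j = false) \/
  exists m, m < n /\ P m = true /\ forall j, j < m -> P j = false.
Proof.
  induction n.
  - left; intros; lia.
  - destruct IHn as [H|(m & H1 & H2 & H3)].
    + destruct (P n) eqn:E.
      * right. exists n; repeat split; auto.
      * left. intros j Hj. destruct (Nat.eq_dec j n); [subst; auto|]. apply H; lia.
    + right. exists m; repeat split; auto.
Qed.

Lemma bound_below (f : nat -> nat) a : exists v, forall j, j <= a -> f j < v.
Proof.
  induction a.
  - exists (S (f 0)). intros j Hj. assert (j = 0) by lia. subst; lia.
  - destruct IHa as [v Hv]. exists (max v (S (f (S a)))). intros j Hj.
    destruct (Nat.eq_dec j (S a)); [subst; lia|]. specialize (Hv j ltac:(lia)). lia.
Qed.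

Lemma key (f g : nat -> nat) : (forall x, g (f x) = x) -> (forall x, f (g x) = x) ->
  exists a, (forall m, a < m -> Pf f m = false) /\ exists m, a < m /\ Qf f m = true.
Proof.
  intros H1 H2. exists (g 0). split.
  - intros m Hm. destruct (Pf f m) eqn:E; auto. exfalso.
    unfold Pf in E. rewrite forallb_forall in E. specialize (E (g 0) ltac:(apply in_seq; lia)).
    rewrite H2 in E. apply Nat.leb_le in E. assert (f m = 0) by lia.
    assert (m = g 0) by (rewrite <- H; auto). lia.
  - destruct (bound_below f (g 0)) as [v Hv].
    destruct (least_aux (fun m => Nat.leb v (f m)) (S (g v))) as [H|(m & _ & Hm & Hl)].
    + specialize (H (g v) ltac:(lia)). simpl in H. rewrite H2 in H.
      apply Nat.leb_gt in H. lia.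
    + apply Nat.leb_le in Hm. exists m. split.
      * destruct (Nat.lt_ge_cases (g 0) m); auto. specialize (Hv m H). lia.
      * unfold Qf. apply forallb_forall. intros j Hj. apply in_seq in Hj.
        specialize (Hl j ltac:(lia)). apply Nat.leb_gt in Hl. apply Nat.leb_le. lia.
Qed.

Lemma st_omega X a m0 : (forall m, a < m -> newmin X m = false) -> a < m0 ->
  newmax X m0 = true -> forall n, m0 <= n -> st X n = 0.
Proof.
  intros H Ha Hm n Hn. induction Hn.
  - destruct m0; [lia|]. simpl. rewrite H by lia. now rewrite Hm.
  - simpl. rewrite H by lia. destruct (newmax X (S m)); auto.
Qed.

Lemma st_omegastar X a m0 : (forall m, a < m -> newmax X m = false) -> a < m0 ->
  newmin X m0 = true -> forall n, m0 <= n -> st X n = 1.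
Proof.
  intros H Ha Hm n Hn. induction Hn.
  - destruct m0; [lia|]. simpl. now rewrite Hm.
  - simpl. rewrite H by lia. destruct (newmin X (S m)); auto.
Qed.

Lemma ev_omega X : iso X omega -> exists N, forall n, N <= n -> st X n = 0.
Proof.
  intros (f & g & H1 & H2 & H3).
  assert (Emin : forall m, newmin X m = Pf f m).
  { intro m. unfold newmin, Pf. apply forallb_ext. intro j. rewrite H3. reflexivity. }
  assert (Emax : forall m, newmax X m = Qf f m).
  { intro m. unfold newmax, Qf. apply forallb_ext. intro j. rewrite H3. reflexivity. }
  destruct (key f g H1 H2) as (a & Ha & m & Hm & Hq).
  exists m. apply (st_omega X a m); auto.
  - intros; rewrite Emin; auto.
  - rewrite Emax; auto.
Qed.

Lemma ev_omegastar X : iso X omegastar -> exists N, forall n, N <= n -> st X n = 1.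
Proof.
  intros (f & g & H1 & H2 & H3).
  assert (Emin : forall m, newmin X m = Qf f m).
  { intro m. unfold newmin, Qf. apply forallb_ext. intro j. rewrite H3. reflexivity. }
  assert (Emax : forall m, newmax X m = Pf f m).
  { intro m. unfold newmax, Pf. apply forallb_ext. intro j. rewrite H3. reflexivity. }
  destruct (key f g H1 H2) as (a & Ha & m & Hm & Hq).
  exists m. apply (st_omegastar X a m); auto.
  - intros; rewrite Emax; auto.
  - rewrite Emin; auto.
Qed.

Lemma LD2 X : LD [omega; omegastar] X -> iso X omega \/ iso X omegastar.
Proof. intros (A & [<-|[<-|[]]] & H); auto. Qed.

Lemma st_cont : continuous_on_LD [omega; omegastar] st.
Proof.
  intros X _ n.
  exists (map (fun p => (0, [fst p; snd p])) (list_prod (seq 0 n) (seq 0 n))).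
  intros Y _ Hag.
  assert (Hr : forall x y, x < n -> y < n -> rel X 0 [x; y] = rel Y 0 [x; y]).
  { intros x y Hx Hy. apply (Hag (0, [x; y])). apply in_map_iff. exists (x, y).
    split; auto. apply in_prod; apply in_seq; lia. }
  induction k; intro Hk; simpl; auto.
  unfold newmin, newmax.
  rewrite IHk by lia.
  rewrite (forallb_ext_in (fun j => rel Y 0 [S k; j]) (fun j => rel X 0 [S k; j])),
    (forallb_ext_in (fun j => rel Y 0 [j; S k]) (fun j => rel X 0 [j; S k])); auto;
    intros j Hj; apply in_seq in Hj; symmetry; apply Hr; lia.
Qed.

Lemma learnE0 : learnable E0 [omega; omegastar].
Proof.
  exists st. split; [apply st_cont|].
  intros X Y HX HY.
  destruct (LD2 X HX) as [IX|IX]; destruct (LD2 Y HY) as [IY|IY].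
  - split; intros _.
    + destruct (ev_omega X IX) as [N HN]. destruct (ev_omega Y IY) as [M HM].
      exists (max N M). intros n Hn. rewrite HN, HM; auto; lia.
    + eapply iso_trans; [exact IX|]. apply iso_sym; auto.
  - split.
    + intro H. exfalso. apply not_iso_omega.
      eapply iso_trans; [apply iso_sym; exact IX|]. eapply iso_trans; eauto.
    + intros [m Hm]. exfalso.
      destruct (ev_omega X IX) as [N HN]. destruct (ev_omegastar Y IY) as [M HM].
      specialize (Hm (max m (max N M)) ltac:(lia)).
      rewrite HN, HM in Hm by lia. discriminate.
  - split.
    + intro H. exfalso. apply not_iso_omega.
      eapply iso_trans; [apply iso_sym; exact IY|]. eapply iso_trans; [apply iso_sym; exact H|]. auto.
    + intros [m Hm]. exfalso.
      destruct (ev_omegastar X IX) as [N HN]. destruct (ev_omega Y IY) as [M HM].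
      specialize (Hm (max m (max N M)) ltac:(lia)).
      rewrite HN, HM in Hm by lia. discriminate.
  - split; intros _.
    + destruct (ev_omegastar X IX) as [N HN]. destruct (ev_omegastar Y IY) as [M HM].
      exists (max N M). intros n Hn. rewrite HN, HM; auto; lia.
    + eapply iso_trans; [exact IX|]. apply iso_sym; auto.
Qed.

Definition hN (N x : nat) := if x <? N then N - 1 - x else x.

Lemma hN_inv N x : hN N (hN N x) = x.
Proof.
  unfold hN. destruct (Nat.ltb_spec x N).
  - destruct (Nat.ltb_spec (N - 1 - x) N); lia.
  - destruct (Nat.ltb_spec x N); lia.
Qed.

Definition pull_rel (h : nat -> nat) (A : Struc sigLO) i l := rel A i (map h l).

Lemma pull_ok h A : forall i l, pull_rel h A i l = true ->
  i < nrel sigLO /\ length l = arity sigLO i.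
Proof.
  intros i l H. destruct (proj2_sig A i (map h l) H) as [H1 H2].
  rewrite length_map in H2. auto.
Qed.

Definition pull h A : Struc sigLO := exist _ (pull_rel h A) (pull_ok h A).

Lemma pull_iso N A : iso (pull (hN N) A) A.
Proof. exists (hN N), (hN N). repeat split; intros; try apply hN_inv. Qed.

Lemma bound_list (l : list nat) : exists N, forall x, In x l -> x < N.
Proof.
  induction l as [|a l [N HN]]. exists 0; intros x [].
  exists (max (S a) N). intros x [<-|Hx]; [lia|]. specialize (HN x Hx). lia.
Qed.

Lemma bound_F (F : list (nat * list nat)) : exists N, forall p, In p F ->
  forall x, In x (snd p) -> x < N.
Proof.
  induction F as [|p F [N HN]]. exists 0; intros p [].
  destruct (bound_list (snd p)) as [M HM].
  exists (max M N). intros q [<-|Hq] x Hx.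
  - specialize (HM x Hx). lia.
  - specialize (HN q Hq x Hx). lia.
Qed.

Lemma agree_small N i l : (forall x, In x l -> x < N) ->
  omega_rel i l = omegastar_rel i (map (hN N) l) /\
  omegastar_rel i l = omega_rel i (map (hN N) l).
Proof.
  intros H. destruct i as [|i]; [|simpl; auto].
  destruct l as [|x [|y [|z l]]]; simpl; auto.
  assert (x < N) by (apply H; simpl; auto). assert (y < N) by (apply H; simpl; auto).
  unfold hN. destruct (Nat.ltb_spec x N); [|lia]. destruct (Nat.ltb_spec y N); [|lia].
  destruct (Nat.leb_spec x y), (Nat.leb_spec (N - 1 - y) (N - 1 - x)),
    (Nat.leb_spec y x), (Nat.leb_spec (N - 1 - x) (N - 1 - y)); split; auto; lia.
Qed.

Lemma notE : ~ learnable Erange [omega; omegastar].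
Proof.
  intros [Gam [Hc Hl]].
  assert (Lo : LD [omega; omegastar] omega) by (exists omega; split; [simpl; auto|apply iso_refl]).
  assert (Ls : LD [omega; omegastar] omegastar) by (exists omegastar; split; [simpl; auto|apply iso_refl]).
  apply not_iso_omega. apply Hl; auto. intro x. split.
  - intros [m Hm].
    destruct (Hc omega Lo (S m)) as [F HF]. destruct (bound_F F) as [N HN].
    set (Y := pull (hN N) omegastar).
    assert (LY : LD [omega; omegastar] Y) by (exists omegastar; split; [simpl; auto|apply pull_iso]).
    assert (Hag : agree_on omega Y F).
    { intros p Hp. apply (agree_small N (fst p) (snd p)). apply HN; auto. }
    pose proof (HF Y LY Hag m ltac:(lia)) as E.
    assert (EY : Erange (Gam Y) (Gam omegastar)) by (apply Hl; auto; apply pull_iso).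
    apply EY. exists m. rewrite E; auto.
  - intros [m Hm].
    destruct (Hc omegastar Ls (S m)) as [F HF]. destruct (bound_F F) as [N HN].
    set (Y := pull (hN N) omega).
    assert (LY : LD [omega; omegastar] Y) by (exists omega; split; [simpl; auto|apply pull_iso]).
    assert (Hag : agree_on omegastar Y F).
    { intros p Hp. apply (agree_small N (fst p) (snd p)). apply HN; auto. }
    pose proof (HF Y LY Hag m ltac:(lia)) as E.
    assert (EY : Erange (Gam Y) (Gam omega)) by (apply Hl; auto; apply pull_iso).
    apply EY. exists m. rewrite E; auto.
Qed.

Theorem mainTheorem7 :
  (forall (sig : signature) (K : list (Struc sig)),
      finite_family K -> learnable Erange K -> learnable E0 K) /\
  (finite_family [omega; omegastar] /\
   learnable E0 [omega; omegastar] /\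
   ~ learnable Erange [omega; omegastar]).
Proof.
  split; [exact part1|]. split; [exact ff|]. split; [exact learnE0|exact notE].
Qed.
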